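(* Let $\mathcal{G}_{k-1}=(V,E_{k-1})$ be an unweighted simple directed graph, let $e_k=(u_k,v_k)$ with $u_k\neq v_k$ and $e_k\notin E_{k-1}$ be an edge to be inserted, and let $\mathcal{G}_k=(V,E_{k-1}\cup\{e_k\})$. Let $L_{k-1}$ be a list of $l_{k-1}$ spanning converging forests sampled uniformly from $\mathcal{F}(\mathcal{G}_{k-1})$. Let $L_k$ be the list obtained from $L_{k-1}$ by keeping all forests of $L_{k-1}$ and, in addition, for each $\phi\in L_{k-1}$ with $r_\phi(u_k)=u_k$ and $r_\phi(v_k)\neq u_k$, adding the forest $\phi\cup\{e_k\}$. Then all forests in $\mathcal{F}(\mathcal{G}_k)$ have the same probability of being included in $L_k$; that is, $\mathbb{P}(\phi_1\in L_k)=\mathbb{P}(\phi_2\in L_k)$ for all $\phi_1,\phi_2\in\mathcal{F}(\mathcal{G}_k)$.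
   Context: A rooted converging tree is a weakly connected digraph without cycles in which one node (the root) has out-degree $0$ and every other node has out-degree $1$ (an isolated node is such a tree rooted at itself). A spanning converging forest of a digraph $\mathcal{G}=(V,E)$ is a spanning subgraph (containing all of $V$ and a subset of $E$, identified with its edge set) whose weakly connected components are rooted converging trees. $\mathcal{F}(\mathcal{G})$ denotes the set of all spanning converging forests of $\mathcal{G}$; $r_\phi(i)$ is the root of the tree of $\phi$ containing $i$. ''Sampled uniformly'' means each forest of $\mathcal{F}(\mathcal{G}_{k-1})$ is equally likely to appear in $L_{k-1}$ (e.g. the entries are independent uniform samples from $\mathcal{F}(\mathcal{G}_{k-1})$). The list $L_k$ is the output of the paper's Insert-Update procedure. *)

(* Defs.v *)
From HB Require Import structures.
From mathcomp Require Import all_boot all_order all_algebra.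
Set Implicit Arguments. Unset Strict Implicit. Unset Printing Implicit Defensive.
Import Order.TTheory GRing.Theory Num.Theory.

Section Forests.
Variable V : finType.

(* A digraph on V is identified with its edge set; a spanning subgraph with a
   subset of the edge set. *)
Definition edge_rel (phi : {set V * V}) : rel V := fun i j => (i, j) \in phi.

Definition weak_rel (phi : {set V * V}) : rel V :=
  fun i j => ((i, j) \in phi) || ((j, i) \in phi).

Definition wcomp (phi : {set V * V}) (i : V) : {set V} :=
  [set j | connect (weak_rel phi) i j].

Definition outdeg (phi : {set V * V}) (i : V) : nat :=
  #|[set j | (i, j) \in phi]|.

Definition dacyclic (phi : {set V * V}) : bool :=
  [forall x : V, forall y : V, ((x, y) \in phi) ==> ~~ connect (edge_rel phi) y x].

Definition is_scf (E phi : {set V * V}) : bool :=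
  [&& phi \subset E, dacyclic phi,
      [forall i, outdeg phi i <= 1] &
      [forall i, #|[set j in wcomp phi i | outdeg phi j == 0]| == 1]].

Definition root_of (phi : {set V * V}) (i : V) : V :=
  odflt i [pick j in wcomp phi i | outdeg phi j == 0].

Definition insert_update (u v : V) (L : seq {set V * V}) : seq {set V * V} :=
  L ++ [seq phi :|: [set (u, v)] |
          phi <- L & (root_of phi u == u) && (root_of phi v != u)].

End Forests.

Definition prob_in (R : numDomainType) (V : finType) (l : nat)
  (P : {ffun l.-tuple {set V * V} -> R})
  (f : l.-tuple {set V * V} -> seq {set V * V}) (phi : {set V * V}) : R :=
  (\sum_(L : l.-tuple {set V * V} | phi \in f L) P L)%R.

(* Main.v *)
Require Import Defs.
From HB Require Import structures.
From mathcomp Require Import all_boot all_order all_algebra.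
Import Order.TTheory GRing.Theory Num.Theory.
Set Implicit Arguments. Unset Strict Implicit.
Section G.
Variable V : finType.
Implicit Types phi : {set V * V}.

Lemma outdeg_uniq phi z x w : outdeg phi z <= 1 -> (z,x) \in phi -> (z,w) \in phi -> x = w.
Proof.
move=> /card_le1_eqP H hx hw; apply: H; by rewrite inE.
Qed.

Lemma sink_no_edge phi z w : outdeg phi z == 0 -> (z,w) \in phi -> False.
Proof.
rewrite /outdeg cards_eq0 => /eqP H hw.
have : w \in [set j | (z, j) \in phi] by rewrite inE.
by rewrite H inE.
Qed.

Lemma sink_connect phi r j : outdeg phi r == 0 -> connect (edge_rel phi) r j -> j = r.
Proof.
move=> Hr /connectP [[|w q] /= Hp ->] //.
by case/andP: Hp => /(sink_no_edge Hr).
Qed.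

Lemma weak_to_sink phi x r : (forall i, outdeg phi i <= 1) -> outdeg phi r == 0 ->
  connect (weak_rel phi) x r -> connect (edge_rel phi) x r.
Proof.
move=> Hd Hr /connectP [p Hp Er]; subst r.
elim: p x Hp Hr => [|z p IH] x /=; first by move=> _ _; exact: connect0.
case/andP=> Hxz Hp Hr; have := IH z Hp Hr.
case/orP: Hxz => Hxz Hc.
  by apply: connect_trans (connect1 _) Hc.
case/connectP: Hc => [[|w q]] /=.
  move=> _ Hl; by rewrite Hl in Hr; case: (sink_no_edge Hr Hxz).
case/andP=> Hzw Hq Hl.
have Ew : w = x by apply: (outdeg_uniq (Hd z)); [exact: Hzw|exact: Hxz].
subst w; apply/connectP; by exists q.
Qed.

Lemma exists_sink phi : dacyclic phi -> forall x, exists r,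
  connect (edge_rel phi) x r && (outdeg phi r == 0).
Proof.
move=> Hac.
suff H : forall n x, #|[set y | connect (edge_rel phi) x y]| <= n -> exists r,
  connect (edge_rel phi) x r && (outdeg phi r == 0).
  by move=> x; apply: (H _ x (leqnn _)).
elim=> [|n IH] x Hn.
  have : x \in [set y | connect (edge_rel phi) x y] by rewrite inE connect0.
  by move=> Hx; move: Hn; rewrite leqn0 cards_eq0 => /eqP E; rewrite E inE in Hx.
case Hx: (outdeg phi x == 0); first by exists x; rewrite connect0.
have : [set j | (x, j) \in phi] != set0 by rewrite -cards_eq0 Hx.
case/set0Pn=> y; rewrite inE => Hxy.
have [r Hr] : exists r, connect (edge_rel phi) y r && (outdeg phi r == 0).
  apply: IH; rewrite -ltnS; apply: leq_trans Hn; apply: proper_card.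
  apply/properP; split.
    apply/subsetP=> z; rewrite !inE; exact: connect_trans (connect1 _).
  exists x; first by rewrite inE connect0.
  rewrite inE; move/forallP: Hac => /(_ x) /forallP /(_ y) /implyP; exact.
exists r; case/andP: Hr => H1 ->; rewrite andbT.
exact: connect_trans (connect1 _) H1.
Qed.

Lemma edge_weak phi x y : connect (edge_rel phi) x y -> connect (weak_rel phi) x y.
Proof.
apply: connect_sub => a b H; apply: connect1; by rewrite /weak_rel -[(a, b) \in phi]/(edge_rel phi a b) H.
Qed.

Lemma scf_of (E : {set V * V}) phi : phi \subset E -> dacyclic phi -> (forall i, outdeg phi i <= 1) ->
  is_scf E phi.
Proof.
move=> Hs Hac Hd; rewrite /is_scf Hs Hac /=.
apply/andP; split; first by apply/forallP.
apply/forallP=> i; apply/cards1P.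
have [r /andP [Hir Hr]] := exists_sink Hac i.
exists r; apply/setP=> j; rewrite !inE.
apply/idP/idP.
  case/andP=> Hij Hj.
  have Hrj : connect (weak_rel phi) r j.
    apply: connect_trans Hij.
    have Hsym : connect_sym (weak_rel phi).
      by apply: sym_connect_sym => a b; rewrite /weak_rel orbC.
    by rewrite Hsym; apply: edge_weak.
  by rewrite (sink_connect Hr (weak_to_sink Hd Hj Hrj)).
by move/eqP->; rewrite Hr andbT; apply: edge_weak.
Qed.

Lemma root_ofE (E : {set V * V}) phi r i : is_scf E phi -> outdeg phi r == 0 -> r \in wcomp phi i ->
  root_of phi i = r.
Proof.
case/and4P=> _ _ _ /forallP /(_ i) /cards1P [x Hx] Hr Hri.
have : r \in [set j in wcomp phi i | outdeg phi j == 0] by rewrite inE Hri Hr.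
rewrite Hx inE => /eqP Er; subst x.
rewrite /root_of; case: pickP => [j Hj|H] /=.
  have : j \in [set j in wcomp phi i | outdeg phi j == 0] by rewrite inE.
  by rewrite Hx inE => /eqP.
by move: (H r); rewrite Hri Hr.
Qed.

End G.
Section M.
Variable V : finType.
Implicit Types phi : {set V * V}.

Lemma scf_sub (E E' : {set V * V}) phi' phi : is_scf E' phi -> phi' \subset phi ->
  phi' \subset E -> is_scf E phi'.
Proof.
case/and4P=> _ Hac /forallP Hd _ Hs HE; apply: scf_of => //.
  apply/forallP=> x; apply/forallP=> y; apply/implyP=> Hxy.
  move/forallP: Hac => /(_ x) /forallP /(_ y) /implyP Hc.
  have Hc' := Hc (subsetP Hs _ Hxy).
  apply: contra Hc'; apply: connect_sub => a b Hab; apply: connect1.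
  exact: (subsetP Hs).
move=> i; apply: leq_trans (Hd i); apply: subset_leq_card.
by apply/subsetP=> j; rewrite !inE; apply: (subsetP Hs).
Qed.

Definition gg (u v : V) phi := if (u, v) \in phi then phi :\ (u, v) else phi.

Lemma gg_scf (E : {set V * V}) u v phi : is_scf (E :|: [set (u, v)]) phi ->
  (u, v) \notin E -> is_scf E (gg u v phi).
Proof.
move=> H Hn; have Hs : phi \subset E :|: [set (u,v)] by case/and4P: H.
rewrite /gg; case: ifP => He.
  apply: scf_sub H _ _; first exact: subsetDl.
  apply/subsetP=> x; rewrite !inE => /andP [Hx1 Hx2].
  by move: (subsetP Hs _ Hx2); rewrite !inE (negbTE Hx1) orbF.
apply: scf_sub H _ _ => //.
apply/subsetP=> x Hx; move: (subsetP Hs _ Hx); rewrite !inE => /orP [//|/eqP Ex].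
by rewrite Ex He in Hx.
Qed.

Lemma cond_gg (E : {set V * V}) u v phi : is_scf (E :|: [set (u, v)]) phi ->
  (u, v) \in phi ->
  (root_of (phi :\ (u, v)) u == u) && (root_of (phi :\ (u, v)) v != u).
Proof.
move=> H He.
have Hs' : is_scf (phi :\ (u, v)) (phi :\ (u, v)).
  by apply: scf_sub H _ _; [exact: subsetDl | exact: subxx].
case/and4P: H => _ Hac /forallP Hd _.
have Hu : outdeg (phi :\ (u, v)) u == 0.
  rewrite /outdeg cards_eq0; apply/eqP/setP=> j; rewrite !inE.
  apply/negP=> /andP [Hne Hj].
  have Ej := outdeg_uniq (Hd u) Hj He.
  by rewrite Ej eqxx in Hne.
rewrite (root_ofE Hs' Hu) ?inE ?connect0 //=.
have Hac' : dacyclic (phi :\ (u, v)) by case/and4P: Hs'.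
have [r /andP [Hvr Hr]] := exists_sink Hac' v.
rewrite (root_ofE Hs' Hr); last by rewrite inE; apply: edge_weak.
rewrite eqxx /=; apply/eqP=> Er; subst r.
move/forallP: Hac => /(_ u) /forallP /(_ v) /implyP /(_ He) /negP; apply.
apply: connect_sub Hvr => a b Hab; apply: connect1.
by move: Hab; rewrite /edge_rel inE => /andP [].
Qed.

Lemma mem_iu (E : {set V * V}) u v phi (L : seq {set V * V}) :
  is_scf (E :|: [set (u, v)]) phi -> (u, v) \notin E -> all (is_scf E) L ->
  (phi \in insert_update u v L) = (gg u v phi \in L).
Proof.
move=> H Hn HL; rewrite /insert_update mem_cat /gg.
have notin : forall psi, psi \in L -> (u, v) \notin psi.
  move=> psi Hpsi; move/allP: HL => /(_ psi Hpsi) /and4P [Hs _ _ _].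
  by apply: contra Hn; apply: (subsetP Hs).
case: ifP => He.
  have -> : (phi \in L) = false.
    by apply/negP => /notin; rewrite He.
  rewrite /=; apply/mapP/idP.
    case=> psi; rewrite mem_filter => /andP [_ Hpsi] ->.
    by rewrite setUC setU1K // notin.
  move=> Hin; exists (phi :\ (u, v)); last by rewrite setUC setD1K.
  by rewrite mem_filter Hin andbT (cond_gg H He).
have -> : (phi \in [seq phi0 :|: [set (u, v)] | phi0 <- L
   & (root_of phi0 u == u) && (root_of phi0 v != u)]) = false.
  apply/negP => /mapP [psi _ Ep].
  by move: He; rewrite Ep !inE eqxx orbT.
by rewrite orbF.
Qed.

End M.

Local Open Scope ring_scope.

Theorem theorem5p2 (R : realFieldType) (V : finType)
  (E : {set V * V}) (u v : V) (l : nat)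
  (P : {ffun l.-tuple {set V * V} -> R}) :
  (forall x : V, (x, x) \notin E) ->
  u != v -> (u, v) \notin E ->
  (forall L, 0 <= P L) ->
  \sum_(L : l.-tuple {set V * V}) P L = 1 ->
  (forall L, P L != 0 -> all (is_scf E) L) ->
  (forall phi1 phi2, is_scf E phi1 -> is_scf E phi2 ->
     prob_in P (fun L => val L) phi1 = prob_in P (fun L => val L) phi2) ->
  forall phi1 phi2,
    is_scf (E :|: [set (u, v)]) phi1 -> is_scf (E :|: [set (u, v)]) phi2 ->
    prob_in P (fun L => insert_update u v (val L)) phi1
    = prob_in P (fun L => insert_update u v (val L)) phi2.
Proof.
move=> _ _ Hn _ _ HL Hunif phi1 phi2 H1 H2.
have key : forall phi, is_scf (E :|: [set (u, v)]) phi ->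
  prob_in P (fun L => insert_update u v (val L)) phi = prob_in P (fun L => val L) (gg u v phi).
  move=> phi H; rewrite /prob_in [LHS]big_mkcond [RHS]big_mkcond.
  apply: eq_bigr => L _; case: (eqVneq (P L) 0) => [->|nz]; first by rewrite !if_same.
  by rewrite (mem_iu H Hn (HL L nz)).
rewrite (key _ H1) (key _ H2); apply: Hunif; exact: gg_scf.
Qed.
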